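(* For every $n\in\mathbb N$, $$\varphi^*(n)=\sum_{\substack{d\mid n\\ \kappa(d)=\kappa(n)}}\varphi(d).$$
   Context: $\varphi$ is Euler's totient function. $d\mid\mid n$ means $d\mid n$ and $\gcd(d,n/d)=1$; $(j,n)_*=\max\{d: d\mid j,\ d\mid\mid n\}$; $\varphi^*(n)=\#\{1\le j\le n:(j,n)_*=1\}$. $\kappa(n)=\prod_{p\mid n}p$ is the squarefree kernel. *)

(* Defs.v *)
From mathcomp Require Import all_boot.
Set Implicit Arguments. Unset Strict Implicit. Unset Printing Implicit Defensive.

Definition unitary_dvd (d n : nat) : bool := (d %| n) && coprime d (n %/ d).

(* (j, n)_* = max { d : d | j, d || n } ; for n >= 1 the max ranges over d <= n *)
Definition ugcd (j n : nat) : nat :=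
  \max_(d < n.+1 | (d %| j) && unitary_dvd d n) d.

Definition utotient (n : nat) : nat :=
  #|[set j : 'I_n.+1 | (0 < (j : nat)) && (ugcd j n == 1)]|.

Definition kernel (n : nat) : nat := \prod_(p <- primes n) p.

(* Main.v *)
Require Import Defs.
From mathcomp Require Import all_boot.

Lemma dvd_kernel p m : prime p -> (p %| kernel m) = (p \in primes m).
Proof.
move=> pp; rewrite /kernel Euclid_dvd_prod //.
have : all prime (primes m) by apply/allP => q; rewrite mem_primes => /andP[].
elim: (primes m) => [|q s IH]; first by rewrite big_nil.
rewrite big_cons in_cons /= => /andP[pq /IH ->].
by rewrite dvdn_prime2.
Qed.

Lemma kernel_eq d n : 0 < n -> d %| n ->
  (kernel d == kernel n) <-> (forall p, prime p -> p %| n -> p %| d).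
Proof.
move=> n0 dn; have d0 : 0 < d by apply: dvdn_gt0 dn.
split => [/eqP E p pp pn|H].
  have : p %| kernel n by rewrite dvd_kernel // mem_primes pp n0.
  by rewrite -E dvd_kernel // mem_primes => /and3P[].
apply/eqP; rewrite /kernel; congr (\prod_(p <- _) p).
apply: (irr_sorted_eq ltn_trans ltnn); rewrite ?sorted_primes // => p.
rewrite !mem_primes n0 d0 /=; apply/andP/andP => [][pp pd]; split => //.
  exact: dvdn_trans dn.
exact: H.
Qed.

Lemma ugcd_ge1 j n : 0 < n -> 1 <= ugcd j n.
Proof.
move=> n0; rewrite /ugcd.
have h1 : 1 < n.+1 by rewrite ltnS.
have := @leq_bigmax_cond _ (fun d : 'I_n.+1 => (d %| j) && unitary_dvd d n) (fun d : 'I_n.+1 => (d : nat)) (Ordinal h1).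
apply; rewrite /= dvd1n /unitary_dvd dvd1n /= /coprime gcd1n //.
Qed.

Lemma ugcd1 n j : 0 < n -> (ugcd j n == 1) <-> (forall p, prime p -> p %| n -> ~~ (p ^ logn p n %| j)).
Proof.
move=> n0; split.
  move=> /eqP U p pp pn; apply/negP => pj.
  have pen : p ^ logn p n %| n by apply: pfactor_dvdnn.
  have hle : p ^ logn p n < n.+1 by rewrite ltnS dvdn_leq.
  have := @leq_bigmax_cond _ (fun d : 'I_n.+1 => (d %| j) && unitary_dvd d n) (fun d : 'I_n.+1 => (d : nat)) (Ordinal hle).
  rewrite -/(ugcd j n) U /= pj /unitary_dvd pen /=.
  have [m cm Em] := pfactor_coprime pp n0.
  have pe0 : 0 < p ^ logn p n by rewrite expn_gt0 prime_gt0.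
  rewrite {2}Em mulnK // coprimeXl //.
  move=> /(_ isT) H1.
  have lg : 0 < logn p n by rewrite logn_gt0 mem_primes pp n0.
  have : 1 < p ^ logn p n.
    apply: leq_trans (prime_gt1 pp) _.
    by rewrite -{1}(expn1 p) leq_exp2l ?prime_gt1.
  by rewrite ltnNge H1.
move=> H; rewrite eqn_leq ugcd_ge1 // andbT.
apply/bigmax_leqP => [[d hd]] /= /andP[dj /andP[dn cd]].
rewrite leqNgt; apply/negP => d1.
have pp := pdiv_prime d1; set p := pdiv d in pp.
have pd : p %| d := pdiv_dvd d.
have d0 : 0 < d by apply: ltnW.
have nd0 : 0 < n %/ d by rewrite divn_gt0 // dvdn_leq.
have En : n = d * (n %/ d) by rewrite mulnC divnK.
have ln : logn p n = logn p d.
  rewrite En lognM // -[RHS]addn0; congr (_ + _).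
  apply/eqP; rewrite eqn0Ngt logn_gt0 mem_primes pp nd0 /=.
  apply/negP => pnd.
  have : p %| gcdn d (n %/ d) by rewrite dvdn_gcd pd.
  by rewrite (eqP cd) dvdn1 => /eqP p1; rewrite p1 in pp.
have := H p pp (dvdn_trans pd dn); rewrite ln.
by rewrite (dvdn_trans (pfactor_dvdnn p d) dj).
Qed.

Lemma pe_gcd n j p : 0 < n -> prime p -> p %| n ->
  ~~ (p ^ logn p n %| j) = (p %| n %/ gcdn j n).
Proof.
move=> n0 pp pn.
set g := gcdn j n.
have g0 : 0 < g by rewrite gcdn_gt0 n0 orbT.
have gn : g %| n := dvdn_gcdr j n.
have q0 : 0 < n %/ g by rewrite divn_gt0 // dvdn_leq.
have En : n = g * (n %/ g) by rewrite mulnC divnK.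
have -> : (p ^ logn p n %| j) = (p ^ logn p n %| g) by rewrite dvdn_gcd pfactor_dvdnn andbT.
rewrite pfactor_dvdn // {1}En lognM // -ltnNge -{1}(addn0 (logn p g)) ltn_add2l.
by rewrite logn_gt0 mem_primes pp q0.
Qed.

Lemma sum_mult g m h : 0 < g ->
  \sum_(0 <= j < m * g) ((g %| j) * h (j %/ g)) = \sum_(0 <= k < m) h k.
Proof.
move=> g0; elim: m => [|m IH]; first by rewrite mul0n !big_geq.
rewrite big_nat_recr //= -IH mulSn addnC.
rewrite (big_cat_nat _ (n := m * g)) ?leq_addr //=; congr (_ + _).
rewrite -{1}(add0n (m * g)) big_addn addKn.
rewrite big_ltn // add0n dvdn_mull // mulnK // mul1n big_nat_cond big1 ?addn0 //.
move=> i /andP[/andP[i1 ig] _].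
rewrite dvdn_addl ?dvdn_mull // .
suff -> : (g %| i) = false by [].
by apply/negP => /(dvdn_leq i1); rewrite leqNgt ig.
Qed.

Lemma count_gcd n d : 0 < n -> d %| n ->
  \sum_(0 <= j < n) (d == n %/ gcdn j n) = totient d.
Proof.
move=> n0 dn.
have d0 : 0 < d by apply: dvdn_gt0 dn.
set g := n %/ d.
have g0 : 0 < g by rewrite divn_gt0 // dvdn_leq.
have En : n = d * g by rewrite mulnC divnK.
rewrite totient_count_coprime -(@sum_mult g d (fun k => coprime d k) g0) -En.
apply: eq_bigr => j _.
have hiff : (d == n %/ gcdn j n) = (gcdn j n == g).
  have G0 : 0 < gcdn j n by rewrite gcdn_gt0 n0 orbT.
  have Gn := dvdn_gcdr j n.
  apply/eqP/eqP => E.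
    by rewrite /g E divnA // mulKn.
  by rewrite E /g divnA // mulKn.
rewrite hiff.
case: (boolP (g %| j)) => gj.
  rewrite mul1n.
  have Ej : j = (j %/ g) * g by rewrite divnK.
  rewrite {1}Ej {1}En -muln_gcdl -[X in _ == X](mul1n g) eqn_pmul2r //.
  by rewrite coprime_sym.
rewrite mul0n; case: eqP => // E; move: gj; by rewrite -E dvdn_gcdl.
Qed.

Lemma good_iff n j : 0 < n ->
  (ugcd j n == 1) = (kernel (n %/ gcdn j n) == kernel n).
Proof.
move=> n0.
have dn : n %/ gcdn j n %| n by apply: dvdn_div; apply: dvdn_gcdr.
apply/idP/idP.
  move=> /(@ugcd1 n j n0) H; apply/(@kernel_eq _ _ n0 dn) => p pp pn.
  by rewrite -pe_gcd // H.
move=> /(@kernel_eq _ _ n0 dn) H; apply/(@ugcd1 n j n0) => p pp pn.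
by rewrite pe_gcd // H.
Qed.

Lemma sum_pick (s : seq nat) (Q : pred nat) x : x \in s -> uniq s ->
  \sum_(d <- s | Q d) (d == x) = Q x.
Proof.
move=> xs us; rewrite big_mkcond (bigD1_seq x) //= eqxx.
rewrite big1 ?addn0; first by case: (Q x).
by move=> d /negbTE ->; case: (Q d).
Qed.

Lemma shift_sum (F : nat -> nat) m : F 0 = F m -> 0 < m ->
  \sum_(1 <= j < m.+1) F j = \sum_(0 <= j < m) F j.
Proof.
case: m => // m E _.
by rewrite big_nat_recr // [RHS]big_ltn // addnC E.
Qed.

Theorem corollary7p3 (n : nat) (hn : 0 < n) :
  utotient n = \sum_(d <- divisors n | kernel d == kernel n) totient d.
Proof.
set f := fun j => kernel (n %/ gcdn j n) == kernel n.
have S1 : utotient n = \sum_(1 <= j < n.+1) f j.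
  rewrite /utotient -sum1_card.
  rewrite (eq_bigl (fun j : 'I_n.+1 => (0 < j) && (ugcd j n == 1))); last by move=> j; rewrite inE.
  rewrite big_mkcond /= -(big_mkord xpredT (fun j => if (0 < j) && (ugcd j n == 1) then 1 else 0)).
  rewrite big_ltn //= add0n; apply: eq_big_nat => j /andP[j1 _].
  by rewrite j1 good_iff //; case: (f j).
have S2 : \sum_(1 <= j < n.+1) f j = \sum_(0 <= j < n) f j.
  by apply: shift_sum => //; rewrite /f gcd0n gcdnn.
rewrite S1 S2.
rewrite (eq_bigr (fun j => \sum_(d <- divisors n | kernel d == kernel n) (d == n %/ gcdn j n))); last first.
  move=> j _; rewrite sum_pick ?divisors_uniq // -dvdn_divisors //.
  by apply: dvdn_div; apply: dvdn_gcdr.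
rewrite exchange_big /= big_seq_cond [RHS]big_seq_cond.
apply: eq_bigr => d /andP[dd _].
by apply: count_gcd => //; rewrite dvdn_divisors.
Qed.
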